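(* Let $q>2$ be a prime power, $m\ge1$, $n=q^m-1=r_1r_2$ with $r_1,r_2>1$, $\gcd(r_1,r_2)=1$ and $r_1=q^a-1$ for some natural number $a$. Let $T=(T_1,T_2):\mathbb{Z}_n\to\mathbb{Z}_{r_1}\times\mathbb{Z}_{r_2}$ be a group isomorphism, let $D^*=\Omega(1)\cup B_1\cup B_2\subseteq\mathbb{Z}_n$ where $\Omega(1)=\{q^i\mid 0\le i<m\}$, $B_1=\{2q^i\mid0\le i<m\}$, $B_2=\{q^i+q^j\mid 0\le i<j<m\}$, let $\overline{D^*}$ be a suitable set of representatives of $D^*$ with $1,2\in\overline{D^*}$, and let $\mathcal{U}$ be a complete set of representatives of the $\sim$-classes of $\overline{D^*}$ with $1,2\in\mathcal{U}$. Then $$|\mathcal{U}|=2+\left|\{C_{r_1}(T_1(e))\mid e\in\mathcal{U}\cap B_2\}\right|=2+\left\lfloor a/2\right\rfloor.$$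
   Context: For integers $x,r$, $C_r(x)=\{xq^i\bmod r\mid i\in\mathbb{N}\}$ is the $q$-cyclotomic coset of $x$ modulo $r$. The $q$-orbit of $(x_1,x_2)\in\mathbb{Z}_{r_1}\times\mathbb{Z}_{r_2}$ is $\{(x_1q^i,x_2q^i)\mid i\in\mathbb{N}\}$. If $D\subseteq\mathbb{Z}_{r_1}\times\mathbb{Z}_{r_2}$ is a union of $q$-orbits, a complete set of representatives $\overline{D}$ of its $q$-orbits is a set of restricted representatives if its projection onto $\mathbb{Z}_{r_1}$ is a complete set of representatives of the $q$-cyclotomic cosets modulo $r_1$ contained in the projection of $D$ onto $\mathbb{Z}_{r_1}$. A complete set of representatives $\overline{D^*}\subseteq D^*$ of the $q$-cyclotomic cosets modulo $n$ in $D^*$ is suitable if $T(\overline{D^*})$ is a set of restricted representatives of the $q$-orbits in $T(D^* )$. On $\overline{D^*}$, $x\sim y$ iff $x\equiv y\pmod{r_1}$. *)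

(* Defs.v *)
From mathcomp Require Import all_boot all_order all_algebra.
Unset Printing Implicit Defensive.
Import GRing.Theory.
Local Open Scope ring_scope.

Definition prime_power (q : nat) : Prop :=
  exists p k : nat, prime p /\ q = (p ^ k.+1)%N.

(* q-cyclotomic coset C_r(x) = { x q^i mod r | i in N }, via the orbit of
   multiplication by q (fconnect = reflexive-transitive closure of z |-> z q). *)
Definition qcoset (q r : nat) (x : 'Z_r) : {set 'Z_r} :=
  [set y | fconnect (fun z : 'Z_r => z * q%:R) x y].

Definition qorbit (q r1 r2 : nat) (x : 'Z_r1 * 'Z_r2) : {set 'Z_r1 * 'Z_r2} :=
  [set y | fconnect (fun z : 'Z_r1 * 'Z_r2 => (z.1 * q%:R, z.2 * q%:R)) x y].

Definition complete_reps {T : finType} (cls : T -> {set T}) (D R : {set T}) : Prop :=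
  [/\ R \subset D,
      (forall y, y \in D -> exists2 x, x \in R & cls x = cls y)
    & (forall x x', x \in R -> x' \in R -> cls x = cls x' -> x = x')].

Definition restricted_reps (q r1 r2 : nat) (D R : {set 'Z_r1 * 'Z_r2}) : Prop :=
  complete_reps (qorbit q r1 r2) D R /\
  complete_reps (qcoset q r1) [set x.1 | x in D] [set x.1 | x in R].

Definition suitable (q n r1 r2 : nat) (T : 'Z_n -> 'Z_r1 * 'Z_r2)
  (Dstar Dbar : {set 'Z_n}) : Prop :=
  Dbar \subset Dstar /\ complete_reps (qcoset q n) Dstar Dbar /\
  restricted_reps q r1 r2 (T @: Dstar) (T @: Dbar).

(* x ~ y iff x = y (mod r1); the equivalence class of x *)
Definition simcls (n r1 : nat) (x : 'Z_n) : {set 'Z_n} :=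
  [set y : 'Z_n | ((x : nat) %% r1 == (y : nat) %% r1)%N].

Definition Omega1 (q m n : nat) : {set 'Z_n} := [set (q%:R : 'Z_n) ^+ i | i : 'I_m].
Definition B1 (q m n : nat) : {set 'Z_n} := [set 2%:R * (q%:R : 'Z_n) ^+ i | i : 'I_m].
Definition B2 (q m n : nat) : {set 'Z_n} :=
  [set (q%:R : 'Z_n) ^+ (ij : 'I_m * 'I_m).1 + (q%:R : 'Z_n) ^+ (ij : 'I_m * 'I_m).2
     | ij in [set ij : 'I_m * 'I_m | (ij.1 < ij.2)%N]].
Definition Dstar (q m n : nat) : {set 'Z_n} := Omega1 q m n :|: B1 q m n :|: B2 q m n.

(* Main.v *)
Require Import Defs.
From mathcomp Require Import all_boot all_order all_algebra zify.
Import GRing.Theory.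
Local Open Scope ring_scope.
Set Implicit Arguments. Unset Strict Implicit.
Lemma A1 i j m : (i < j -> j < m -> 1 < m)%N. Proof. lia. Qed.
Lemma A2 q x y : (2 < q -> q <= y -> x + y = 2 -> False)%N. Proof. lia. Qed.
Lemma A3 k a : (0 < k -> k <= a %/ 2 -> k.-1 < a %/ 2)%N. Proof. lia. Qed.
Lemma A4 k a : (a %/ 2 < k -> k < a -> (a - k).-1 < a %/ 2 /\ 0 < a - k)%N. Proof. lia. Qed.
Lemma A5 k a : (k < a %/ 2 -> k.+1 < a)%N. Proof. lia. Qed.
Lemma A6 k l a : (k < a %/ 2 -> l < a %/ 2 -> (l.+1 = k.+1 \/ l.+1 = a - k.+1) -> l = k)%N.
Proof. lia. Qed.


Lemma natZ_inj (r x y : nat) : (1 < r)%N -> (x < r)%N -> (y < r)%N ->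
  (x%:R : 'Z_r) = y%:R -> x = y.
Proof. by move=> r1 hx hy /(congr1 (@nat_of_ord _)); rewrite !val_Zp_nat // !modn_small. Qed.

Lemma qcosetP q r (x y : 'Z_r) :
  reflect (exists k, y = x * (q%:R : 'Z_r) ^+ k) (y \in qcoset q r x).
Proof.
have It k : iter k (fun z : 'Z_r => z * q%:R) x = x * q%:R ^+ k.
  by elim: k => [|k IH] /=; rewrite ?expr0 ?mulr1 // IH exprS -mulrA [q%:R * _]mulrC.
rewrite inE; apply: (iffP idP).
  by move=> h; exists (findex (fun z : 'Z_r => z * q%:R) x y); rewrite -It iter_findex.
by case=> k ->; rewrite -It fconnect_iter.
Qed.

Lemma qcoset_self q r (x : 'Z_r) : x \in qcoset q r x.
Proof. by apply/qcosetP; exists 0%N; rewrite expr0 mulr1. Qed.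

Lemma qcoset_eq q r a (x y : 'Z_r) : (0 < a)%N -> (q%:R : 'Z_r) ^+ a = 1 ->
  y \in qcoset q r x -> qcoset q r y = qcoset q r x.
Proof.
move=> a0 qa /qcosetP [k ->]; apply/setP => w; apply/qcosetP/qcosetP => -[l ->].
  by exists (k + l)%N; rewrite exprD mulrA.
exists (k * a.-1 + l)%N; rewrite -mulrA -exprD addnA -{1}(muln1 k) -mulnDr.
by rewrite add1n prednK // exprD exprM exprAC qa expr1n mul1r.
Qed.

Lemma qcoset_eqP q r a (x y : 'Z_r) : (0 < a)%N -> (q%:R : 'Z_r) ^+ a = 1 ->
  qcoset q r x = qcoset q r y -> exists k, y = x * (q%:R : 'Z_r) ^+ k.
Proof. by move=> a0 qa e; apply/qcosetP; rewrite e qcoset_self. Qed.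

Lemma qcoset_mulq q r a (x : 'Z_r) i : (0 < a)%N -> (q%:R : 'Z_r) ^+ a = 1 ->
  qcoset q r (x * q%:R ^+ i) = qcoset q r x.
Proof. by move=> a0 qa; apply: (qcoset_eq a0 qa); apply/qcosetP; exists i. Qed.

Lemma qcoset_unit q r a (u x y : 'Z_r) : (0 < a)%N -> (q%:R : 'Z_r) ^+ a = 1 ->
  u \is a GRing.unit ->
  qcoset q r (u * x) = qcoset q r (u * y) <-> qcoset q r x = qcoset q r y.
Proof.
move=> a0 qa uu; split=> e.
  have [k hk] := qcoset_eqP a0 qa e; apply/esym/(qcoset_eq a0 qa)/qcosetP.
  by exists k; apply: (mulrI uu); rewrite hk mulrA.
have [k hk] := qcoset_eqP a0 qa e; apply/esym/(qcoset_eq a0 qa)/qcosetP.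
by exists k; rewrite hk mulrA.
Qed.

Lemma notdvd q d : (2 < q)%N -> ~~ (q %| 1 + q ^ d)%N.
Proof.
move=> q2; case: d => [|d].
  by rewrite expn0; apply/negP => /(dvdn_leq (isT : (0 < 2)%N)); lia.
by rewrite addnC expnS dvdn_addr ?dvdn_mulr // dvdn1; lia.
Qed.

Lemma val_uniq q s s' x y : (1 < q)%N -> ~~ (q %| x)%N -> ~~ (q %| y)%N ->
  (q ^ s * x = q ^ s' * y)%N -> s = s' /\ x = y.
Proof.
move=> q1.
wlog le : s s' x y / (s <= s')%N.
  move=> W hx hy e; case: (leqP s s') => h; first exact: W.
  by have [-> ->] := W s' s y x (ltnW h) hy hx (esym e).
move=> hx hy; rewrite -(subnKC le) expnD -mulnA => /eqP.
rewrite eqn_mul2l expn_eq0 eqn0Ngt (ltnW q1) /= => /eqP e.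
case E: (s' - s)%N e => [|t]; first by rewrite expn0 mul1n => ->; split=> //; lia.
by move=> e; move: hx; rewrite e expnS -mulnA dvdn_mulr.
Qed.

Lemma bound q a s t : (2 < q)%N -> (2 <= a)%N -> (s < a)%N -> (t < a)%N ->
  (q ^ s + q ^ t < q ^ a - 1)%N.
Proof.
move=> q2 a2 sa ta.
have hs : (q ^ s <= q ^ a.-1)%N by rewrite leq_exp2l; lia.
have ht : (q ^ t <= q ^ a.-1)%N by rewrite leq_exp2l; lia.
have hX : (q <= q ^ a.-1)%N by rewrite -{1}(expn1 q) leq_exp2l; lia.
have ea : (q ^ a = q * q ^ a.-1)%N by rewrite -expnS prednK //; lia.
rewrite ea; nia.
Qed.


Lemma QA q a r1 : (2 < q)%N -> r1 = (q ^ a - 1)%N -> (1 < r1)%N ->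
  (q%:R : 'Z_r1) ^+ a = 1.
Proof.
move=> q2 Ha r11; rewrite -natrX.
have -> : (q ^ a = r1 + 1)%N by rewrite Ha subnK // expn_gt0; lia.
by rewrite natrD pchar_Zp // add0r.
Qed.


Lemma QE q a r1 e : (2 < q)%N -> r1 = (q ^ a - 1)%N -> (1 < r1)%N ->
  (q%:R : 'Z_r1) ^+ e = q%:R ^+ (e %% a).
Proof.
move=> q2 Ha r11; by rewrite {1}(divn_eq e a) exprD exprM exprAC (QA q2 Ha r11) expr1n mul1r.
Qed.

Lemma apos q a r1 : r1 = (q ^ a - 1)%N -> (1 < r1)%N -> (0 < a)%N.
Proof. by case: a => // -> ; rewrite expn0. Qed.

Lemma F2 q a r1 k : (2 < q)%N -> r1 = (q ^ a - 1)%N -> (1 < r1)%N -> (k < a)%N ->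
  qcoset q r1 (1 + q ^ k)%N%:R <> qcoset q r1 1.
Proof.
move=> q2 Ha r11 ka e.
have a0 := apos Ha r11; have qa := QA q2 Ha r11.
have [e' he] := qcoset_eqP a0 qa (esym e).
rewrite mul1r (QE _ q2 Ha r11) -natrX in he.
case: (ltnP 1 a) => a2.
  have b1 : (1 + q ^ k < r1)%N by rewrite Ha; have := @bound q a 0 k q2 a2; rewrite expn0; apply; lia.
  have b2 : (q ^ (e' %% a) < r1)%N.
    by rewrite Ha; have := @bound q a (e' %% a) (e' %% a) q2 a2; rewrite ltn_pmod //; move=> /(_ isT isT); lia.
  have h := natZ_inj r11 b1 b2 he.
  have := @val_uniq q 0 (e' %% a) (1 + q ^ k) 1 (ltnW q2) (notdvd k q2).
  rewrite dvdn1 expn0 mul1n muln1 h => /(_ ltac:(lia) erefl) [_] hh; have : (0 < q ^ k)%N by rewrite expn_gt0; lia.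
  lia.
have a1 : a = 1%N by lia.
move: he; rewrite a1 modn1 expn0; have -> : k = 0%N by lia.
rewrite expn0 => /eqP; rewrite natrD -subr_eq0 addrK; apply/negP; exact: oner_neq0.
Qed.

Lemma F4 q a r1 k : (2 < q)%N -> r1 = (q ^ a - 1)%N -> (1 < r1)%N -> (0 < k < a)%N ->
  qcoset q r1 2%:R <> qcoset q r1 (1 + q ^ k)%N%:R.
Proof.
move=> q2 Ha r11 /andP[k0 ka] e.
have a0 := apos Ha r11; have qa := QA q2 Ha r11.
have [e' he] := qcoset_eqP a0 qa e.
rewrite (QE _ q2 Ha r11) -natrX -natrM in he.
have a2 : (1 < a)%N by lia.
have b1 : (1 + q ^ k < r1)%N by rewrite Ha; have := @bound q a 0 k q2 a2; rewrite expn0; apply; lia.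
have b2 : (2 * q ^ (e' %% a) < r1)%N.
  by rewrite Ha; have := @bound q a (e' %% a) (e' %% a) q2 a2; rewrite ltn_pmod //; move=> /(_ isT isT); lia.
have h := natZ_inj r11 b1 b2 he.
have := @val_uniq q 0 (e' %% a) (1 + q ^ k) 2 (ltnW q2) (notdvd k q2).
have n2 := notdvd 0 q2; rewrite expn0 in n2.
rewrite expn0 mul1n mulnC h => /(_ n2 erefl) [_] hh.
have : (q ^ 1 <= q ^ k)%N by rewrite leq_exp2l; lia.
rewrite expn1; lia.
Qed.

Lemma F5 q a r1 k : (2 < q)%N -> r1 = (q ^ a - 1)%N -> (1 < r1)%N -> (k <= a)%N ->
  qcoset q r1 (1 + q ^ k)%N%:R = qcoset q r1 (1 + q ^ (a - k))%N%:R.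
Proof.
move=> q2 Ha r11 ka.
have a0 := apos Ha r11; have qa := QA q2 Ha r11.
apply/esym/(qcoset_eq a0 qa)/qcosetP; exists (a - k)%N.
rewrite !natrD !natrX mulrDl mul1r -exprD subnKC // qa addrC //.
Qed.

Lemma F6 q a r1 i j : (2 < q)%N -> r1 = (q ^ a - 1)%N -> (1 < r1)%N -> (i <= j)%N ->
  ((q ^ i + q ^ j)%N%:R : 'Z_r1) = (1 + q ^ ((j - i) %% a))%N%:R * q%:R ^+ i.
Proof.
move=> q2 Ha r11 ij.
rewrite !natrD !natrX -(QE _ q2 Ha r11) mulrDl mul1r -exprD subnK //.
Qed.

Lemma F3 q a r1 k l : (2 < q)%N -> r1 = (q ^ a - 1)%N -> (1 < r1)%N ->
  (0 < k < a)%N -> (0 < l < a)%N ->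
  qcoset q r1 (1 + q ^ k)%N%:R = qcoset q r1 (1 + q ^ l)%N%:R ->
  l = k \/ l = (a - k)%N.
Proof.
move=> q2 Ha r11 /andP[k0 ka] /andP[l0 la] ee.
have a0 := apos Ha r11; have qa := QA q2 Ha r11.
have [e he] := qcoset_eqP a0 qa ee.
rewrite (QE _ q2 Ha r11) in he.
have ea : (e %% a < a)%N by rewrite ltn_pmod.
set e' := (e %% a)%N in he ea.
have a2 : (1 < a)%N by lia.
have b1 : (1 + q ^ l < r1)%N by rewrite Ha; have := @bound q a 0 l q2 a2; rewrite expn0; apply; lia.
case: (ltnP (e' + k) a) => ek.
  rewrite -natrX -natrM in he.
  have b2 : ((1 + q ^ k) * q ^ e' < r1)%N.
    rewrite Ha mulnDl mul1n -expnD; have := @bound q a e' (k + e') q2 a2; lia.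
  have h := natZ_inj r11 b1 b2 he.
  have := @val_uniq q 0 e' (1 + q ^ l) (1 + q ^ k) (ltnW q2) (notdvd l q2) (notdvd k q2).
  rewrite expn0 mul1n mulnC h => /(_ erefl) [_] hh.
  have : (q ^ l = q ^ k)%N by lia.
  by move=> /(expnI (ltnW q2)) ->; left.
set s := (e' + k - a)%N.
have E : (1 + q ^ k)%N%:R * (q%:R : 'Z_r1) ^+ e' = ((1 + q ^ (a - k)) * q ^ s)%N%:R.
  rewrite natrM !natrD !natrX mulrDl mulrDl !mul1r -!exprD.
  have -> : (k + e' = a + s)%N by rewrite /s; lia.
  have -> : (a - k + s = e')%N by rewrite /s; lia.
  by rewrite exprD qa mul1r addrC.
rewrite E in he.
have b2 : ((1 + q ^ (a - k)) * q ^ s < r1)%N.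
  rewrite Ha mulnDl mul1n -expnD; have := @bound q a s (a - k + s) q2 a2; rewrite /s; lia.
have h := natZ_inj r11 b1 b2 he.
have := @val_uniq q 0 s (1 + q ^ l) (1 + q ^ (a - k)) (ltnW q2) (notdvd l q2) (notdvd _ q2).
rewrite expn0 mul1n mulnC h => /(_ erefl) [_] hh.
have : (q ^ l = q ^ (a - k))%N by lia.
by move=> /(expnI (ltnW q2)) ->; right.
Qed.

Unset Implicit Arguments. Set Strict Implicit.

Theorem mainTheorem5 (q m n r1 r2 a : nat)
  (Hq : prime_power q) (Hq2 : (2 < q)%N) (Hm : (1 <= m)%N)
  (Hn : n = (q ^ m - 1)%N) (Hr : n = (r1 * r2)%N)
  (Hr1 : (1 < r1)%N) (Hr2 : (1 < r2)%N) (Hcop : coprime r1 r2)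
  (Ha : r1 = (q ^ a - 1)%N)
  (T : 'Z_n -> 'Z_r1 * 'Z_r2)
  (HTadd : forall x y, T (x + y) = T x + T y) (HTbij : bijective T)
  (Dbar U : {set 'Z_n})
  (HDbar : suitable q n r1 r2 T (Dstar q m n) Dbar)
  (H1D : 1 \in Dbar) (H2D : 2%:R \in Dbar)
  (HU : complete_reps (simcls n r1) Dbar U)
  (H1U : 1 \in U) (H2U : 2%:R \in U) :
  #|U| = (2 + #|[set qcoset q r1 (T e).1 | e in U :&: B2 q m n]|)%N /\
  (2 + #|[set qcoset q r1 (T e).1 | e in U :&: B2 q m n]|)%N = (2 + a %/ 2)%N.
Proof.
have a0 := apos Ha Hr1.
have qa := QA Hq2 Ha Hr1.
have n2 : (2 < n)%N by rewrite Hr; nia.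
have n1 : (1 < n)%N by lia.
have am : (a <= m)%N.
  have : (r1 <= n)%N by apply: dvdn_leq; [lia | rewrite Hr dvdn_mulr].
  rewrite Ha Hn => h; have : (q ^ a <= q ^ m)%N.
    have : (0 < q ^ a)%N by rewrite expn_gt0; lia.
    lia.
  by rewrite leq_exp2l //; lia.
pose P := fun z : 'Z_n => (T z).1.
have T0 : T 0 = 0.
  have h := HTadd 0 0; rewrite addr0 in h.
  by apply/(addrI (T 0)); rewrite -h addr0.
have PD : forall x y, P (x + y) = P x + P y by move=> x y; rewrite /P HTadd.
have Pn : forall k, P (k%:R) = P 1 *+ k.
  elim=> [|k IH]; first by rewrite /P T0.
  by rewrite mulrS PD IH mulrS.
pose u := P 1.
have Pnat : forall k, P k%:R = u * k%:R by move=> k; rewrite Pn mulr_natr.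
have Pval : forall z : 'Z_n, P z = u * (z : nat)%:R.
  by move=> z; rewrite -Pnat natr_Zp.
have uU : u \is a GRing.unit.
  case: HTbij => Ti TK TiK.
  apply/unitrPr; exists ((Ti (1, 0) : nat)%:R).
  by rewrite -Pval /P TiK.
have hsim : forall x y, P x = P y -> simcls n r1 x = simcls n r1 y.
  move=> x y; rewrite !Pval => /(mulrI uU) /(congr1 (@nat_of_ord _)).
  rewrite !val_Zp_nat // => e; apply/setP=> w; by rewrite !inE e.
have hsim' : forall x y, simcls n r1 x = simcls n r1 y -> P x = P y.
  move=> x y e; have : y \in simcls n r1 x by rewrite e inE.
  by rewrite inE => /eqP e2; rewrite !Pval -[in LHS]Zp_nat_mod // e2 Zp_nat_mod.
case: HDbar => HDsub [_ [_ [HD1sub HD1cov HD1inj]]].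
case: HU => HUsub HUcov HUinj.
pose C := qcoset q r1.
have memD1 : forall x, x \in Dbar -> P x \in [set x.1 | x in T @: Dbar].
  by move=> x hx; apply/imsetP; exists (T x) => //; apply: imset_f.
have hUD : forall x, x \in U -> x \in Dbar by move=> x; apply/subsetP.
have hUDs : forall x, x \in U -> x \in Dstar q m n by move=> x /hUD; apply/subsetP.
have hinjU : forall x y, x \in U -> y \in U -> C (P x) = C (P y) -> x = y.
  move=> x y hx hy e; apply: HUinj => //; apply: hsim.
  by apply: HD1inj => //; apply: memD1; apply: hUD.
have hcovU : forall b, b \in Dstar q m n -> exists2 y, y \in U & C (P y) = C (P b).
  move=> b hb.
  have [z hz hCz] := HD1cov (P b) ltac:(by apply/imsetP; exists (T b) => //; apply: imset_f).
  move: hz hCz => /imsetP [w /imsetP [x hx ->] ->] hCz.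
  have [y hy hs] := HUcov x hx.
  by exists y => //; rewrite (hsim' y x hs).
have PQ : forall i, P ((q%:R : 'Z_n) ^+ i) = u * (q%:R) ^+ i.
  by move=> i; rewrite -natrX Pnat natrX.
have hc1 : forall i, C (P ((q%:R : 'Z_n) ^+ i)) = C u.
  by move=> i; rewrite PQ /C (qcoset_mulq _ _ a0 qa).
have hc2 : forall i, C (P (2%:R * (q%:R : 'Z_n) ^+ i)) = C (u * 2%:R).
  by move=> i; rewrite -natrX -natrM Pnat natrM natrX mulrA /C (qcoset_mulq _ _ a0 qa).
pose cls k := C (u * (1 + q ^ k)%N%:R).
have hcB : forall i j, (i <= j)%N ->
    C (P ((q%:R : 'Z_n) ^+ i + (q%:R : 'Z_n) ^+ j)) = cls ((j - i) %% a)%N.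
  move=> i j ij; rewrite -!natrX -natrD Pnat (F6 Hq2 Ha Hr1 ij) mulrA.
  by rewrite /C (qcoset_mulq _ _ a0 qa).
have d1 : forall k, (k < a)%N -> cls k <> C u.
  move=> k ka; rewrite /cls /C -{2}(mulr1 u) (qcoset_unit _ _ a0 qa uU).
  exact: (F2 Hq2 Ha Hr1 ka).
have d2 : forall k, (0 < k < a)%N -> cls k <> C (u * 2%:R).
  move=> k ka; rewrite /cls /C (qcoset_unit _ _ a0 qa uU) => e.
  by apply: (F4 Hq2 Ha Hr1 ka); rewrite e.
have d3 : cls 0%N = C (u * 2%:R) by rewrite /cls expn0.
have d4 : forall k l, (0 < k < a)%N -> (0 < l < a)%N -> cls k = cls l ->
    l = k \/ l = (a - k)%N.
  move=> k l hk hl; rewrite /cls /C (qcoset_unit _ _ a0 qa uU); exact: F3.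
have d5 : forall k, (k <= a)%N -> cls k = cls (a - k)%N.
  move=> k ka; rewrite /cls /C (qcoset_unit _ _ a0 qa uU); exact: F5.
have n12 : (1 : 'Z_n) != 2%:R.
  apply/eqP => h; have : ((1%N)%:R : 'Z_n) = (2%N)%:R by rewrite mulr1n.
  by move/(natZ_inj n1 n1 n2).
have n2B2 : 2%:R \notin B2 q m n.
  apply/negP => /imsetP [[i j]]; rewrite inE /= => hij.
  rewrite -!natrX -natrD => /esym h.
  have hb : (q ^ i + q ^ j < n)%N.
    rewrite Hn; apply: bound => //; exact: (A1 hij (ltn_ord j)).
  have := natZ_inj n1 hb n2 h.
  have : (q ^ 1 <= q ^ j)%N by rewrite leq_exp2l; [exact: (leq_ltn_trans (leq0n _) hij) | exact: ltnW Hq2].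
  by rewrite expn1 => hq /(A2 Hq2 hq).
have n1B2 : 1 \notin B2 q m n.
  apply/negP => /imsetP [[i j]]; rewrite inE /= => hij h.
  have := hcB i j (ltnW hij); rewrite -h -/u.
  by move/esym; apply: d1; rewrite ltn_pmod.
have hUsplit : U :\: B2 q m n = [set 1; 2%:R].
  apply/setP => y; rewrite !inE; apply/idP/idP.
    case/andP => nb yU; have := hUDs y yU; rewrite /Dstar !inE -orbA.
    case/or3P.
    - case/imsetP => i _ ey; apply/orP; left; apply/eqP.
      by apply: hinjU => //; rewrite ey hc1.
    - case/imsetP => i _ ey; apply/orP; right; apply/eqP.
      by apply: hinjU => //; rewrite ey hc2 Pnat.
    - by rewrite (negbTE nb).
  by case/orP => /eqP ->; rewrite ?H1U ?H2U ?n1B2 ?n2B2.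
have hinj2 : {in U :&: B2 q m n &, injective (fun e => qcoset q r1 (T e).1)}.
  by move=> x y /setIP [hx _] /setIP [hy _]; apply: hinjU.
have G1 : #|U| = (2 + #|[set qcoset q r1 (T e).1 | e in U :&: B2 q m n]|)%N.
  rewrite (card_in_imset hinj2) -(cardsID (B2 q m n) U) hUsplit cards2 n12.
  by rewrite addnC.
split; first exact: G1.

have hS : [set qcoset q r1 (T e).1 | e in U :&: B2 q m n] =
          [set cls (k : nat).+1 | k : 'I_(a %/ 2)].
  apply/setP => S; apply/idP/idP.
    case/imsetP => e /setIP [eU eB] ->.
    move: (eB) eU => /imsetP [[i j]]; rewrite inE /= => hij ee eU; rewrite ee; rewrite ee in eU.
    have := hcB i j (ltnW hij); rewrite -/(P _) -/C => ->.
    have ka : ((j - i) %% a < a)%N by rewrite ltn_pmod.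
    set k := ((j - i) %% a)%N in ka *.
    case: (posnP k) => k0.
      have e2 : q%:R ^+ i + q%:R ^+ j = 2%:R :> 'Z_n.
        apply: hinjU => //; rewrite hcB ?(ltnW hij) // -/k k0 d3 Pnat //.
      by move: eB n2B2; rewrite ee e2 => ->.
    case: (leqP k (a %/ 2)) => kh.
      apply/imsetP; exists (Ordinal (A3 k0 kh)); first done.
      by rewrite /= prednK.
    have [hk hk0] := A4 kh ka.
    apply/imsetP; exists (Ordinal hk); first done.
    rewrite /= prednK //.
    exact: (d5 _ (ltnW ka)).
  case/imsetP => k _ ->.
  have kA : (k.+1 < a)%N := A5 (ltn_ord k).
  have km : (k.+1 < m)%N := leq_trans kA am.
  have hb : (q%:R : 'Z_n) ^+ (Ordinal Hm : 'I_m) + (q%:R : 'Z_n) ^+ (Ordinal km : 'I_m)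
              \in B2 q m n.
    by apply/imsetP; exists (Ordinal Hm, Ordinal km) => //; rewrite inE /=.
  have hbD : (q%:R : 'Z_n) ^+ (Ordinal Hm : 'I_m) + (q%:R : 'Z_n) ^+ (Ordinal km : 'I_m)
              \in Dstar q m n by rewrite /Dstar in_setU hb orbT.
  have [y yU hy] := hcovU _ hbD.
  have {}hy : C (P y) = cls k.+1.
    by rewrite hy (hcB 0 k.+1 (leq0n _)) subn0 modn_small.
  apply/imsetP; exists y => //; rewrite inE yU /=.
  move: (hUDs y yU); rewrite /Dstar !inE -orbA; case/or3P => //.
    case/imsetP => i _ ey; move: hy; rewrite ey hc1 => /esym.
    by move/d1 => /(_ kA).
  case/imsetP => i _ ey; move: hy; rewrite ey hc2 => /esym.
  by move/d2 => /(_ kA).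
rewrite hS card_imset ?card_ord //.
move=> k l /d4 h.
apply/val_inj; apply/esym; apply: (A6 (ltn_ord k) (ltn_ord l)).
by apply: h; rewrite /= ?A5.
Qed.
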